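(* Let $X=\mathbb{R}^n$ and suppose A1–A3 hold. Let $\{x_k\}$ be generated by Algorithm 1 in which the acceptance test is replaced by $$f(x_k+\alpha_k\beta^{l}d_k)\le R_k+\rho\alpha_k\beta^{l}\langle\nabla f(x_k),d_k\rangle,$$ where $R_k$ satisfies $f(x_k)\le R_k\le\max_{0\le j\le m(k)}f(x_{k-j})$, with integers $m(0)=0$ and $0\le m(k)\le\min\{m(k-1)+1,N\}$ for $k\ge1$, for a fixed $N\in\mathbb{N}$ (i.e. $\nu_{k,l}=R_k-f(x_k)$). If the level set $\{x\in\mathbb{R}^n:\ f(x)\le f(x_0)\}$ is bounded, then either there exists $\bar k$ with $\nabla f(x_{\bar k})=0$, or $\liminf_{k\to\infty}\|\nabla f(x_k)\|=0$.
   Context: Let $(X,\langle\cdot,\cdot\rangle)$ be a real Hilbert space with induced norm $\|\cdot\|$, and $f:X\to\mathbb{R}$ Fréchet differentiable with gradient $\nabla f$. Algorithm 1 (general non-monotone descent algorithm): parameters $x_0\in X$, $\alpha_0>0$, $\beta,\rho\in(0,1)$. For $k=0,1,2,\dots$: choose $d_k\in X$ with $\langle\nabla f(x_k),d_k\rangle<0$; then for $l=0,1,2,\dots$ choose a number $\nu_{k,l}\ge 0$ and test $$f(x_k+\alpha_k\beta^l d_k)\le f(x_k)+\rho\alpha_k\beta^l\langle\nabla f(x_k),d_k\rangle+\nu_{k,l};$$ let $l_k$ be the first $l$ for which this holds, set $\nu_k:=\nu_{k,l_k}$, $x_{k+1}=x_k+\alpha_k\beta^{l_k}d_k$ and $\alpha_{k+1}=\alpha_k\beta^{l_k-1}$.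 It is assumed the algorithm generates infinite sequences (all $l_k$ finite). Assumptions: A1: $\nabla f$ is Lipschitz continuous with constant $L>0$. A2: there is $f_{low}\in\mathbb{R}$ with $f(x)\ge f_{low}$ for all $x\in X$. A3: there are constants $c_1,c_2>0$ with $\langle\nabla f(x_k),d_k\rangle\le -c_1\|\nabla f(x_k)\|^2$ and $\|d_k\|\le c_2\|\nabla f(x_k)\|$ for all $k$. *)

(* Defs.v *)
From Stdlib Require Fin.
From Stdlib Require Import Reals Lra Lia ZArith.
Open Scope R_scope.

Definition vec (n : nat) := Fin.t n -> R.

Fixpoint fsum (n : nat) : (Fin.t n -> R) -> R :=
  match n return (Fin.t n -> R) -> R with
  | O => fun _ => 0
  | S m => fun g => g Fin.F1 + fsum m (fun i => g (Fin.FS i))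
  end.

Definition inner {n : nat} (u v : vec n) : R := fsum n (fun i => u i * v i).
Definition vnorm {n : nat} (u : vec n) : R := sqrt (inner u u).
Definition vadd {n : nat} (u v : vec n) : vec n := fun i => u i + v i.
Definition vsub {n : nat} (u v : vec n) : vec n := fun i => u i - v i.
Definition vscale {n : nat} (a : R) (u : vec n) : vec n := fun i => a * u i.
Definition vzero (n : nat) : vec n := fun _ => 0.

Definition has_gradient {n : nat} (f : vec n -> R) (g : vec n -> vec n) : Prop :=
  forall x : vec n, forall eps : R, eps > 0 -> exists delta : R, delta > 0 /\
    forall h : vec n, vnorm h < delta ->
      Rabs (f (vadd x h) - f x - inner (g x) h) <= eps * vnorm h.

Fixpoint maxf (g : nat -> R) (m : nat) : R :=
  match m with
  | O => g O
  | S p => Rmax (maxf g p) (g (S p))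
  end.

(* Main.v *)
Require Import Defs.
From Stdlib Require Import Reals ZArith Lra Lia Psatz FunctionalExtensionality Classical.
Open Scope R_scope.

Lemma fsum_le n : forall a b : Fin.t n -> R, (forall i, a i <= b i) -> fsum n a <= fsum n b.
Proof. induction n; intros a b H; simpl. lra. specialize (IHn (fun i => a (Fin.FS i)) (fun i => b (Fin.FS i))). 
  assert (H1 := H Fin.F1). assert (fsum n (fun i => a (Fin.FS i)) <= fsum n (fun i => b (Fin.FS i))) by (apply IHn; intro; apply H). lra. Qed.

Lemma fsum_add n : forall a b : Fin.t n -> R, fsum n (fun i => a i + b i) = fsum n a + fsum n b.
Proof. induction n; intros a b; simpl. lra. rewrite (IHn (fun i => a (Fin.FS i)) (fun i => b (Fin.FS i))). lra. Qed.

Lemma fsum_scal n : forall (c : R) (a : Fin.t n -> R), fsum n (fun i => c * a i) = c * fsum n a.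
Proof. induction n; intros c a; simpl. lra. rewrite (IHn c (fun i => a (Fin.FS i))). lra. Qed.

Lemma fsum_ext n : forall a b : Fin.t n -> R, (forall i, a i = b i) -> fsum n a = fsum n b.
Proof. intros a b H. replace b with a; auto. apply functional_extensionality; auto. Qed.

Lemma inner_ge0 {n} (u : vec n) : 0 <= inner u u.
Proof. unfold inner. replace 0 with (fsum n (fun i => 0 * (u i * u i))).
  apply fsum_le. intro i. nra. rewrite fsum_scal. lra. Qed.

Lemma inner_scal_r {n} (u v : vec n) a : inner u (vscale a v) = a * inner u v.
Proof. unfold inner, vscale. rewrite <- fsum_scal. apply fsum_ext. intro; ring. Qed.

Lemma inner_sub_l {n} (u w v : vec n) : inner (vsub u w) v = inner u v - inner w v.
Proof. unfold inner, vsub. replace (fsum n (fun i => w i * v i)) with (- fsum n (fun i => -1 * (w i * v i))) by (rewrite fsum_scal; ring).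
  unfold Rminus. rewrite Ropp_involutive, <- fsum_add. apply fsum_ext. intro; ring. Qed.

Lemma vnorm_sq {n} (u : vec n) : vnorm u ^ 2 = inner u u.
Proof. unfold vnorm. rewrite pow2_sqrt; auto. apply inner_ge0. Qed.

Lemma vnorm_ge0 {n} (u : vec n) : 0 <= vnorm u.
Proof. apply sqrt_pos. Qed.

Lemma vnorm_scale {n} (u : vec n) a : vnorm (vscale a u) = Rabs a * vnorm u.
Proof. unfold vnorm. replace (inner (vscale a u) (vscale a u)) with ((a*a) * inner u u).
  rewrite sqrt_mult_alt by (apply Rle_0_sqr). rewrite <- sqrt_Rsqr_abs. reflexivity.
  unfold inner, vscale. rewrite <- fsum_scal. apply fsum_ext. intro; ring. Qed.

Lemma amgm {n} (w d : vec n) s : 2 * s * inner w d <= s^2 * inner w w + inner d d.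
Proof. unfold inner. rewrite <- fsum_scal, <- fsum_scal, <- fsum_add. apply fsum_le. intro i. cbv beta. assert (H := Rle_0_sqr (s * w i - d i)). unfold Rsqr in H. nra. Qed.

Lemma phi_deriv {n} (f : vec n -> R) grad (Hd : has_gradient f grad) (y d : vec n) c :
  derivable_pt_lim (fun s => f (vadd y (vscale s d))) c (inner (grad (vadd y (vscale c d))) d).
Proof.
  intros eps Heps. set (p := vadd y (vscale c d)).
  assert (Hnd := vnorm_ge0 d).
  destruct (Hd p (eps / 2 / (vnorm d + 1))) as [del [Hdel H]].
  { apply Rdiv_lt_0_compat; lra. }
  assert (Hp : 0 < del / (vnorm d + 1)) by (apply Rdiv_lt_0_compat; lra).
  exists (mkposreal _ Hp). simpl. intros h Hh0 Hh.
  assert (Eq : vadd y (vscale (c + h) d) = vadd p (vscale h d)).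
  { apply functional_extensionality. intro i. unfold p, vadd, vscale. ring. }
  rewrite Eq. fold p.
  assert (Hah : 0 < Rabs h) by (apply Rabs_pos_lt; auto).
  assert (Hn : vnorm (vscale h d) < del).
  { rewrite vnorm_scale. apply Rlt_le_trans with (del / (vnorm d + 1) * (vnorm d + 1)).
    - assert (Rabs h * vnorm d <= Rabs h * (vnorm d + 1)) by nra.
      assert (Rabs h * (vnorm d + 1) < del / (vnorm d + 1) * (vnorm d + 1)) by (apply Rmult_lt_compat_r; lra).
      lra.
    - right. field. lra. }
  specialize (H _ Hn). rewrite inner_scal_r, vnorm_scale in H.
  set (g := inner (grad p) d) in *.
  replace ((f (vadd p (vscale h d)) - f p) / h - g) with ((f (vadd p (vscale h d)) - f p - h * g) / h) by (field; auto).
  unfold Rdiv at 1. rewrite Rabs_mult, Rabs_inv.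
  apply Rle_lt_trans with (eps / 2 / (vnorm d + 1) * (Rabs h * vnorm d) * / Rabs h).
  { apply Rmult_le_compat_r. left; apply Rinv_0_lt_compat; auto. exact H. }
  replace (eps / 2 / (vnorm d + 1) * (Rabs h * vnorm d) * / Rabs h) with (eps / 2 * (vnorm d / (vnorm d + 1))) by (field; lra).
  assert (vnorm d / (vnorm d + 1) < 1). { apply Rmult_lt_reg_r with (vnorm d + 1). lra. unfold Rdiv. rewrite Rmult_assoc, Rinv_l by lra. lra. }
  assert (0 <= vnorm d / (vnorm d + 1)) by (apply Rmult_le_pos; [lra| left; apply Rinv_0_lt_compat; lra]).
  nra.
Qed.

Lemma descent {n} (f : vec n -> R) grad (Hd : has_gradient f grad) L
  (HL : forall x y : vec n, vnorm (vsub (grad x) (grad y)) <= L * vnorm (vsub x y))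
  (HL0 : L > 0) (y d : vec n) t (Ht : 0 < t) :
  f (vadd y (vscale t d)) <= f y + t * inner (grad y) d + L * t ^ 2 * inner d d.
Proof.
  destruct (MVT_cor2 (fun s => f (vadd y (vscale s d))) (fun s => inner (grad (vadd y (vscale s d))) d) 0 t Ht)
    as [c [Hc1 Hc2]].
  { intros c _. apply phi_deriv; auto. }
  assert (E0 : vadd y (vscale 0 d) = y).
  { apply functional_extensionality. intro i. unfold vadd, vscale. ring. }
  rewrite E0 in Hc1.
  set (w := vsub (grad (vadd y (vscale c d))) (grad y)).
  assert (Hw : inner (grad (vadd y (vscale c d))) d = inner (grad y) d + inner w d).
  { unfold w. rewrite inner_sub_l. ring. }
  assert (Hwn : vnorm w <= L * c * vnorm d).
  { unfold w. eapply Rle_trans. apply HL.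
    assert (E1 : vsub (vadd y (vscale c d)) y = vscale c d).
    { apply functional_extensionality. intro i. unfold vsub, vadd, vscale. ring. }
    rewrite E1, vnorm_scale, Rabs_pos_eq by lra. lra. }
  assert (Hw0 := vnorm_ge0 w). assert (Hd0 := vnorm_ge0 d).
  assert (Hwsq : inner w w <= (L * c * vnorm d) ^ 2). { rewrite <- vnorm_sq. apply pow_incr. lra. }
  assert (Ham := amgm w d (/ (L * c))).
  assert (HLc : 0 < L * c) by nra.
  assert (Hiw : inner w d <= L * c * inner d d).
  { rewrite <- (vnorm_sq d) in Ham |- *.
    replace ((/ (L * c)) ^ 2 * inner w w) with (inner w w / (L*c)^2) in Ham by (field; lra).
    assert (inner w w / (L*c)^2 <= vnorm d ^ 2).
    { apply Rmult_le_reg_r with ((L*c)^2). nra. unfold Rdiv. rewrite Rmult_assoc, Rinv_l by nra. nra. }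
    assert (2 * / (L * c) * inner w d <= 2 * vnorm d ^ 2) by lra.
    apply Rmult_le_reg_l with (2 * / (L*c)). apply Rmult_lt_0_compat; [lra| apply Rinv_0_lt_compat; lra].
    replace (2 * / (L * c) * (L * c * vnorm d ^ 2)) with (2 * vnorm d ^ 2) by (field; lra). lra. }
  assert (Hdd := inner_ge0 d).
  assert (L * c * inner d d <= L * t * inner d d) by (apply Rmult_le_compat_r; nra).
  rewrite Hw in Hc1. nra.
Qed.

Lemma maxf_ge g m : forall j, (j <= m)%nat -> g j <= maxf g m.
Proof. induction m; intros j Hj; simpl.
  - replace j with O by lia. lra.
  - destruct (Nat.eq_dec j (S m)) as [->|Hne]. apply Rmax_r.
    eapply Rle_trans. apply IHm. lia. apply Rmax_l. Qed.

Lemma maxf_le g m C : (forall j, (j <= m)%nat -> g j <= C) -> maxf g m <= C.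
Proof. induction m; intros H; simpl. apply H; lia.
  apply Rmax_lub. apply IHm. intros; apply H; lia. apply H; lia. Qed.

Theorem corollary3
  (n : nat) (f : vec n -> R) (grad : vec n -> vec n)
  (Hdiff : has_gradient f grad)
  (* A1 *)
  (HA1 : exists L : R, L > 0 /\ forall x y : vec n,
           vnorm (vsub (grad x) (grad y)) <= L * vnorm (vsub x y))
  (* A2 *)
  (HA2 : exists flow : R, forall x : vec n, f x >= flow)
  (* parameters *)
  (alpha0 beta rho : R) (N : nat)
  (Halpha0 : alpha0 > 0) (Hbeta : 0 < beta < 1) (Hrho : 0 < rho < 1)
  (* generated sequences *)
  (x : nat -> vec n) (d : nat -> vec n) (alpha : nat -> R)
  (l : nat -> nat) (Rk : nat -> R) (m : nat -> nat)
  (Hm0 : m O = O)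
  (HmS : forall k, (m (S k) <= Nat.min (m k + 1) N)%nat)
  (HR : forall k, f (x k) <= Rk k /\
          Rk k <= maxf (fun j => f (x (k - j)%nat)) (m k))
  (Hdesc : forall k, inner (grad (x k)) (d k) < 0)
  (Halpha_0 : alpha O = alpha0)
  (Hacc : forall k,
     f (vadd (x k) (vscale (alpha k * beta ^ l k) (d k)))
       <= Rk k + rho * (alpha k * beta ^ l k) * inner (grad (x k)) (d k))
  (Hfirst : forall k (j : nat), (j < l k)%nat ->
     ~ (f (vadd (x k) (vscale (alpha k * beta ^ j) (d k)))
          <= Rk k + rho * (alpha k * beta ^ j) * inner (grad (x k)) (d k)))
  (Hx : forall k, x (S k) = vadd (x k) (vscale (alpha k * beta ^ l k) (d k)))
  (Halpha : forall k,
     alpha (S k) = alpha k * powerRZ beta (Z.of_nat (l k) - 1))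
  (* A3 *)
  (HA3 : exists c1 c2 : R, c1 > 0 /\ c2 > 0 /\ forall k,
     inner (grad (x k)) (d k) <= - c1 * (vnorm (grad (x k)))^2 /\
     vnorm (d k) <= c2 * vnorm (grad (x k)))
  (* bounded level set *)
  (Hlevel : exists B : R, forall y : vec n, f y <= f (x O) -> vnorm y <= B) :
  (exists kb : nat, grad (x kb) = vzero n) \/
  (forall eps : R, eps > 0 -> forall K : nat,
     exists k : nat, (K <= k)%nat /\ vnorm (grad (x k)) < eps).
Proof.
  destruct HA1 as [L [HL0 HL]]. destruct HA2 as [flow Hflow].
  destruct HA3 as [c1 [c2 [Hc1 [Hc2 HA3]]]].
  set (tbar := (1 - rho) * c1 / (L * c2 ^ 2)).
  assert (Htbar : 0 < tbar).
  { unfold tbar. apply Rdiv_lt_0_compat. nra. apply Rmult_lt_0_compat; [lra| apply pow_lt; lra]. }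
  assert (Armijo : forall k t, 0 < t -> t <= tbar ->
     f (vadd (x k) (vscale t (d k))) <= Rk k + rho * t * inner (grad (x k)) (d k)).
  { intros k t Ht Htb. pose proof (descent f grad Hdiff L HL HL0 (x k) (d k) t Ht) as Hd.
    destruct (HA3 k) as [H1 H2]. destruct (HR k) as [H3 _].
    set (G := vnorm (grad (x k))) in *. set (gd := inner (grad (x k)) (d k)) in *.
    assert (HG := vnorm_ge0 (grad (x k))). fold G in HG.
    assert (Hdn := vnorm_ge0 (d k)).
    rewrite <- vnorm_sq in Hd.
    assert (Hdd : vnorm (d k) ^ 2 <= c2^2 * G^2).
    { replace (c2^2 * G^2) with ((c2 * G)^2) by ring. apply pow_incr. split; lra. }
    assert (HtL : t * (L * c2^2) <= (1 - rho) * c1).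
    { unfold tbar in Htb. apply Rmult_le_compat_r with (r := L * c2^2) in Htb. 2: nra.
      unfold Rdiv in Htb. rewrite Rmult_assoc, Rinv_l in Htb by (apply Rgt_not_eq; apply Rmult_lt_0_compat; [lra| apply pow_lt; lra]). lra. }
    assert (L * t ^ 2 * vnorm (d k) ^ 2 <= t * (L * c2^2) * t * G^2).
    { replace (t * (L * c2^2) * t * G^2) with (L * t^2 * (c2^2 * G^2)) by ring.
      apply Rmult_le_compat_l; nra. }
    assert (t * (L * c2^2) * t * G^2 <= (1 - rho) * c1 * t * G^2).
    { apply Rmult_le_compat_r. nra. apply Rmult_le_compat_r; lra. }
    assert ((1 - rho) * c1 * t * G^2 <= (1 - rho) * t * (- gd)).
    { replace ((1 - rho) * c1 * t * G^2) with (((1-rho)*t)*(c1*G^2)) by ring.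
      apply Rmult_le_compat_l. apply Rmult_le_pos; lra. lra. }
    nra. }
  set (amin := Rmin alpha0 tbar).
  assert (Hamin : 0 < amin) by (unfold amin; apply Rmin_glb_lt; lra).
  assert (Step : forall k, alpha k >= amin ->
     alpha k * beta ^ l k >= beta * amin /\ alpha (S k) >= amin).
  { intros k Hk. rewrite Halpha. destruct (l k) as [|j] eqn:El.
    - simpl. replace (powerRZ beta (Z.of_nat 0 - 1)) with (/ beta) by (simpl; field; lra).
      split. nra. assert (1 <= / beta). { rewrite <- Rinv_1. apply Rinv_le_contravar; lra. } apply Rle_ge; apply Rle_trans with (alpha k * 1). lra. apply Rmult_le_compat_l. lra. rewrite Rmult_1_r; lra.
    - assert (Hpj : 0 < beta ^ j) by (apply pow_lt; lra).
      assert (Hgt : alpha k * beta ^ j > tbar).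
      { apply Rnot_le_gt. intro Hle. apply (Hfirst k j). lia. apply Armijo; auto. nra. }
      replace (Z.of_nat (S j) - 1)%Z with (Z.of_nat j) by lia. rewrite <- pow_powerRZ.
      assert (amin <= tbar) by apply Rmin_r.
      simpl. split; nra. }
  assert (Hal : forall k, alpha k >= amin).
  { induction k. rewrite Halpha_0. assert (amin <= alpha0) by apply Rmin_l. lra.
    apply Step; auto. }
  assert (Dec : forall k, f (x (S k)) <= Rk k - rho * beta * amin * c1 * vnorm (grad (x k)) ^ 2).
  { intro k. rewrite Hx. eapply Rle_trans. apply Hacc.
    destruct (Step k (Hal k)) as [Ht _]. destruct (HA3 k) as [H1 _].
    assert (HG := vnorm_ge0 (grad (x k))).
    set (G := vnorm (grad (x k))) in *. set (gd := inner (grad (x k)) (d k)) in *.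
    set (t := alpha k * beta ^ l k) in *.
    assert (t * gd <= beta * amin * (- c1 * G^2)).
    { apply Rle_trans with (t * (- c1 * G^2)). apply Rmult_le_compat_l; nra.
      assert (0 <= c1 * G^2) by nra. nra. }
    nra. }
  assert (Hmk : forall k, (m k <= k)%nat /\ (m k <= N)%nat).
  { induction k. rewrite Hm0. lia. specialize (HmS k). lia. }
  set (M := fun k => maxf (fun j => f (x (k - j)%nat)) (m k)).
  assert (Mmono1 : forall k, M (S k) <= M k).
  { intro k. unfold M at 1. apply maxf_le. intros j Hj. destruct j as [|j].
    - replace (S k - 0)%nat with (S k) by lia. eapply Rle_trans. apply Dec.
      destruct (HR k) as [_ H]. assert (0 <= rho * beta * amin * c1 * vnorm (grad (x k)) ^ 2).
      { assert (HG := vnorm_ge0 (grad (x k))). apply Rmult_le_pos. repeat (apply Rmult_le_pos; try lra). nra. }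
      fold M in H. unfold M. lra.
    - replace (S k - S j)%nat with (k - j)%nat by lia. unfold M.
      apply (maxf_ge (fun j0 => f (x (k - j0)%nat))). specialize (HmS k). lia. }
  assert (Mmono : forall p k, M (p + k)%nat <= M k).
  { induction p; intro k. simpl; lra. eapply Rle_trans. apply Mmono1. apply IHp. }
  assert (Mlb : forall k, flow <= M k).
  { intro k. unfold M. eapply Rle_trans. 2: apply (maxf_ge (fun j => f (x (k - j)%nat))) with (j := O); lia.
    replace (k - 0)%nat with k by lia. specialize (Hflow (x k)). lra. }
  right. intros eps Heps K. apply NNPP. intro Hno.
  assert (Hge : forall k, (K <= k)%nat -> vnorm (grad (x k)) >= eps).
  { intros k Hk. apply Rnot_lt_ge. intro Hlt. apply Hno. exists k. auto. }
  set (delta := rho * beta * amin * c1 * eps ^ 2).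
  assert (Hdelta : 0 < delta).
  { unfold delta. repeat apply Rmult_lt_0_compat; try lra. }
  assert (Blk : forall k, (K <= k)%nat -> M (S (N + k)) <= M k - delta).
  { intros k Hk. unfold M at 1. apply maxf_le. intros j Hj.
    destruct (Hmk (S (N + k))) as [_ HmN].
    replace (S (N + k) - j)%nat with (S (N + k - j)) by lia.
    set (i := (N + k - j)%nat).
    eapply Rle_trans. apply Dec.
    assert (Hgi := Hge i ltac:(unfold i; lia)).
    assert (eps ^ 2 <= vnorm (grad (x i)) ^ 2) by (apply pow_incr; split; lra).
    assert (delta <= rho * beta * amin * c1 * vnorm (grad (x i)) ^ 2).
    { unfold delta. apply Rmult_le_compat_l; auto. repeat (apply Rmult_le_pos; try lra). }
    destruct (HR i) as [_ Hri]. fold M in Hri.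
    assert (M i <= M k). { replace i with ((i - k) + k)%nat by (unfold i; lia). apply Mmono. }
    unfold M in *. lra. }
  assert (Iter : forall p, M (p * S N + K)%nat <= M K - INR p * delta).
  { induction p. simpl. lra.
    replace (S p * S N + K)%nat with (S (N + (p * S N + K))) by lia.
    eapply Rle_trans. apply Blk. lia. rewrite S_INR. lra. }
  assert (HM0 : M K <= f (x O)).
  { replace K with (K + 0)%nat by lia. eapply Rle_trans. apply Mmono.
    unfold M. rewrite Hm0. simpl. lra. }
  destruct (INR_unbounded ((f (x O) - flow) / delta)) as [p Hp].
  assert (INR p * delta > f (x O) - flow).
  { apply Rmult_gt_compat_r with (r := delta) in Hp; auto. unfold Rdiv in Hp.
    rewrite Rmult_assoc, Rinv_l in Hp by lra. lra. }
  specialize (Iter p). specialize (Mlb (p * S N + K)%nat). lra.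
Qed.
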